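(* Let $M$ be a real $n\times n$ matrix, $n\ge2$. If $M^{[2]}$ is a $P_0$-matrix, then no nonreal eigenvalue of $M$ lies in the open left half-plane $\mathbb{C}_-$. If $-M^{[2]}$ is a $P_0$-matrix, then no nonreal eigenvalue of $M$ lies in the open right half-plane $\mathbb{C}_+$.
   Context: A square real matrix is a $P_0$-matrix if all its principal minors are nonnegative. For $M\in\mathbb{R}^{n\times n}$, $M^{[2]}$ is the second additive compound: the matrix of $u\wedge v\mapsto Mu\wedge v+u\wedge Mv$ on $\Lambda^2\mathbb{R}^n$ with respect to the basis $e_i\wedge e_j$ ($i<j$) in lexicographic order. *)

(* Defs.v *)
From HB Require Import structures.
From mathcomp Require Import all_boot all_order all_algebra.
From mathcomp Require Import complex.
Set Implicit Arguments. Unset Strict Implicit. Unset Printing Implicit Defensive.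
Import Order.TTheory GRing.Theory Num.Theory.
Local Open Scope ring_scope.

(* Index pairs (i, j), i < j, of the basis e_i /\ e_j of Lambda^2 R^n,
   listed in lexicographic order (enum 'I_n is increasing). *)
Definition wedge_pairs (n : nat) : seq ('I_n * 'I_n) :=
  [seq p : 'I_n * 'I_n <- [seq (i, j) | i <- enum 'I_n, j <- enum 'I_n] | (p.1 < p.2)%N].

Definition wedge_dim (n : nat) : nat := size (wedge_pairs n).

Definition wedge_idx (n : nat) (a : 'I_(wedge_dim n)) : 'I_n * 'I_n :=
  tnth (in_tuple (wedge_pairs n)) a.

(* Second additive compound M^[2]: the matrix of u/\v |-> Mu/\v + u/\Mv in the
   basis e_i/\e_j (i<j, lexicographic).  Expanding
   M^[2](e_k/\e_l) = sum_r M_rk e_r/\e_l + sum_r M_rl e_k/\e_r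
   on the basis (using e_l/\e_r = - e_r/\e_l, e_r/\e_r = 0), the coefficient of
   e_i/\e_j is  [l=j] M_ik - [l=i] M_jk + [k=i] M_jl - [k=j] M_il. *)
Definition compound2 {R : pzRingType} (n : nat) (M : 'M[R]_n)
  : 'M[R]_(wedge_dim n) :=
  \matrix_(a, b)
    let: (i, j) := wedge_idx a in
    let: (k, l) := wedge_idx b in
      (if l == j then M i k else 0) - (if l == i then M j k else 0)
    + (if k == i then M j l else 0) - (if k == j then M i l else 0).

Definition P0_matrix {R : numDomainType} (m : nat) (A : 'M[R]_m) : Prop :=
  forall S : {set 'I_m},
    0 <= \det (mxsub (@enum_val _ (mem S)) (@enum_val _ (mem S)) A).

Definition complex_eigenvalue {R : rcfType} (n : nat) (M : 'M[R]_n)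
  (z : R[i]) : bool :=
  eigenvalue (map_mx (real_complex R) M) z.

(* Main.v *)
Require Import Defs.
From HB Require Import structures.
From mathcomp Require Import all_boot all_order all_algebra all_fingroup.
From mathcomp Require Import complex ring lra.
Import Order.TTheory GRing.Theory Num.Theory.
Set Implicit Arguments. Unset Strict Implicit. Unset Printing Implicit Defensive.
Local Open Scope ring_scope.

Section P0.
Variable R : numFieldType.

Lemma det_mxsub_perm k (s : 'S_k) (B : 'M[R]_k) : \det (mxsub s s B) = \det B.
Proof.
have -> : mxsub s s B = perm_mx s *m B *m perm_mx s^-1.
  by rewrite -row_permE -col_permE; apply/matrixP => i j; rewrite !mxE.
rewrite !det_mulmx mulrC mulrA -det_mulmx -perm_mxM mulVg perm_mx1 det1 mul1r.
by [].
Qed.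

Lemma det_mxsub_inj k k' (g : 'I_k -> 'I_k') (B : 'M[R]_k') :
  k = k' -> injective g -> \det (mxsub g g B) = \det B.
Proof.
move=> ek; subst k' => ig.
rewrite -(det_mxsub_perm (perm ig) B); congr (\det _).
by apply/matrixP => i j; rewrite !mxE !permE.
Qed.

Definition P0' m (A : 'M[R]_m) :=
  forall k (f : 'I_k -> 'I_m), injective f -> 0 <= \det (mxsub f f A).

Lemma P0_P0' m (A : 'M[R]_m) : P0_matrix A -> P0' A.
Proof.
move=> hA k f injf.
pose S := [set f x | x in 'I_k].
have fS x : f x \in S by apply: imset_f.
pose g x : 'I_#|S| := enum_rank_in (fS x) (f x).
have gE x : enum_val (g x) = f x by rewrite /g enum_rankK_in.
have -> : mxsub f f A = mxsub g g (mxsub (@enum_val _ (mem S)) (@enum_val _ (mem S)) A).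
  by apply/matrixP => i j; rewrite !mxE !gE.
rewrite det_mxsub_inj; first exact: hA.
  by rewrite card_imset // cardT size_enum_ord.
by move=> x y /(congr1 enum_val); rewrite !gE => /injf.
Qed.

Lemma P0'_sub m (A : 'M[R]_m.+1) i : P0' A -> P0' (row' i (col' i A)).
Proof.
move=> hA k f injf.
have -> : mxsub f f (row' i (col' i A)) = mxsub (lift i \o f) (lift i \o f) A.
  by apply/matrixP => r c; rewrite !mxE.
by apply: hA => x y /= /lift_inj /injf.
Qed.

Definition Dg m (d : 'I_m -> R) : 'M[R]_m := \matrix_(i, j) (d i *+ (i == j)).

Lemma det_decomp m (A : 'M[R]_m.+1) d i :
  \det (A + Dg d) = \det (A + Dg (fun j => if j == i then 0 else d j))
                    + d i * \det (row' i (col' i A) + Dg (fun j => d (lift i j))).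
Proof.
pose C := \matrix_(r, c) if r == i then (r == c)%:R else (A + Dg d) r c.
rewrite (@determinant_multilinear _ _ _ (A + Dg (fun j => if j == i then 0 else d j)) C i 1 (d i)); last 3 first.
- apply/rowP => j; rewrite !mxE eqxx /=.
  by case: (i =P j) => [<-|_]; rewrite ?mulr1 ?mulr0 ?mulr1n ?mulr0n ?addr0 ?mul1r.
- by apply/matrixP => r c; rewrite !mxE eq_sym (negbTE (neq_lift _ _)).
- by apply/matrixP => r c; rewrite !mxE eq_sym (negbTE (neq_lift _ _)).
rewrite mul1r; congr (_ + _ * _).
rewrite (expand_det_row _ i) (bigD1 i) //= big1 => [|j nji]; last first.
  by rewrite !mxE eqxx eq_sym (negbTE nji) mul0r.
rewrite addr0 !mxE !eqxx mul1r /cofactor addnn -muln2 exprM sqrr_sign mul1r.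
apply: congr1; apply/matrixP => r c; rewrite !mxE eq_sym (negbTE (neq_lift _ _)).
by rewrite (inj_eq lift_inj).
Qed.


Lemma det_zero_diag m (A : 'M[R]_m) (d : 'I_m -> R) : P0' A -> (forall j, d j = 0) ->
  0 <= \det (A + Dg d).
Proof.
move=> hA d0.
have -> : A + Dg d = mxsub id id A.
  by apply/matrixP => r c; rewrite !mxE d0 mul0rn addr0.
exact: hA.
Qed.

Lemma weak_pos m : forall k (A : 'M[R]_m) (d : 'I_m -> R), P0' A -> (forall i, 0 <= d i) ->
  leq #|[set j | d j != 0]| k -> 0 <= \det (A + Dg d).
Proof.
elim: m => [|m IHm] k A d hA hd.
  by rewrite det_mx00 ler01.
elim: k A d hA hd => [|k IHk] A d hA hd hk.
  apply: det_zero_diag => // j; apply/eqP; apply: contraTT hk => dj.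
  by rewrite -ltnNge; apply/card_gt0P; exists j; rewrite inE.
case: (pickP (fun j => d j != 0)) => [j dj|d0]; last first.
  by apply: det_zero_diag => // x; apply/eqP; move/negbT: (d0 x); rewrite negbK.
rewrite (det_decomp _ _ j); apply: addr_ge0.
  apply: IHk => //.
    by move=> x; case: (x == j).
  have jS : j \in [set x | d x != 0] by rewrite inE.
  move: hk; rewrite (cardsD1 j) jS add1n ltnS => hk.
  apply: leq_trans hk; apply: subset_leq_card; apply/subsetP => x.
  rewrite !inE; case: (x =P j) => [->|/eqP nxj]; rewrite ?eqxx //= nxj.
apply: mulr_ge0 => //.
exact: (IHm _ (row' j (col' j A)) (fun x => d (lift j x)) (P0'_sub j hA) (fun x => hd _) (leqnn _)).
Qed.

Lemma strict_pos m (A : 'M[R]_m) (d : 'I_m -> R) : P0' A -> (forall i, 0 < d i) ->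
  0 < \det (A + Dg d).
Proof.
elim: m A d => [|m IH] A d hA hd.
  by rewrite det_mx00 ltr01.
rewrite (det_decomp _ _ ord0); apply: ltr_wpDl.
  apply: (weak_pos hA _ (leqnn _)) => x; case: (x == ord0) => //; exact: ltW.
apply: mulr_gt0 => //.
exact: (IH (row' ord0 (col' ord0 A)) (fun x => d (lift ord0 x)) (P0'_sub ord0 hA) (fun x => hd _)).
Qed.

Lemma P0_shift m (A : 'M[R]_m) t : P0_matrix A -> 0 < t -> 0 < \det (A + t%:M).
Proof.
move=> hA ht.
have -> : t%:M = Dg (fun _ : 'I_m => t) by apply/matrixP => r c; rewrite !mxE.
by apply: strict_pos => //; apply: P0_P0'.
Qed.

End P0.


Lemma map_compound2 (R S : pzRingType) (f : {rmorphism R -> S}) n (M : 'M[R]_n) :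
  map_mx f (compound2 M) = compound2 (map_mx f M).
Proof.
apply/matrixP => a b; rewrite !mxE.
case: (wedge_idx a) => i j; case: (wedge_idx b) => k l.
by rewrite !(rmorphB, rmorphD) /= !(fun_if f) !rmorph0 ?mxE.
Qed.

Lemma sum_wedge (K : pzRingType) n (F : 'I_n * 'I_n -> K) :
  \sum_(a < wedge_dim n) F (wedge_idx a) =
  \sum_(i < n) \sum_(j < n) (if (i < j)%N then F (i, j) else 0).
Proof.
rewrite /wedge_idx /wedge_dim -(big_tnth _ _ _ xpredT F) /wedge_pairs big_filter.
rewrite big_mkcond big_allpairs big_enum /=.
by apply: eq_bigr => i _; rewrite big_enum.
Qed.

Section Eig.
Variable K : fieldType.
Variable n : nat.
Variable M : 'M[K]_n.
Variables (v u : 'rV[K]_n) (x y : K).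
Hypothesis hv : v *m M = x *: v.
Hypothesis hu : u *m M = y *: u.

Definition W (i j : 'I_n) := v 0 i * u 0 j - v 0 j * u 0 i.
Definition wv : 'rV[K]_(wedge_dim n) :=
  \row_a W (wedge_idx a).1 (wedge_idx a).2.

Lemma hv' k : \sum_i v 0 i * M i k = x * v 0 k.
Proof. by have /rowP/(_ k) := hv; rewrite !mxE. Qed.
Lemma hu' k : \sum_i u 0 i * M i k = y * u 0 k.
Proof. by have /rowP/(_ k) := hu; rewrite !mxE. Qed.

Lemma swap_sum (F : 'I_n -> 'I_n -> K) (G : 'I_n -> 'I_n -> K) :
  (forall i : 'I_n, F i i = 0) -> (forall i j : 'I_n, F j i = - F i j) ->
  \sum_(i < n) \sum_(j < n) (if (i < j)%N then F i j * (G i j - G j i) else 0) =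
  \sum_(i < n) \sum_(j < n) F i j * G i j.
Proof.
move=> Fd Fa.
transitivity (\sum_(i < n) \sum_(j < n) (if (i < j)%N then F i j * G i j else 0) +
  \sum_(i < n) \sum_(j < n) (if (i < j)%N then F j i * G j i else 0)).
  rewrite -big_split /=; apply: eq_bigr => i _; rewrite -big_split /=.
  apply: eq_bigr => j _; case: (i < j)%N; last by rewrite addr0.
  by rewrite Fa; ring.
rewrite [X in _ + X]exchange_big /=.
rewrite -big_split /=; apply: eq_bigr => i _; rewrite -big_split /=.
apply: eq_bigr => j _.
case: (ltngtP i j) => [//|//|/val_inj ->]; first by rewrite addr0.
  by rewrite add0r.
by rewrite Fd mul0r addr0.
Qed.

Lemma wv_eig : wv *m compound2 M = (x + y) *: wv.
Proof.
apply/rowP => b; rewrite !mxE.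
under eq_bigr do rewrite !mxE.
case: (wedge_idx b) => k l /=.
pose G (i j : 'I_n) := (if l == j then M i k else 0) + (if k == i then M j l else 0).
rewrite (sum_wedge (fun p => W p.1 p.2 * (let: (i, j) := p in
   (if l == j then M i k else 0) - (if l == i then M j k else 0) +
   (if k == i then M j l else 0) - (if k == j then M i l else 0)))) /=.
transitivity (\sum_(i < n) \sum_(j < n)
   (if (i < j)%N then W i j * (G i j - G j i) else 0)).
  apply: eq_bigr => i _; apply: eq_bigr => j _; case: (i < j)%N => //.
  by rewrite /G; ring.
rewrite swap_sum; last 2 first.
- by move=> i; rewrite /W; ring.
- by move=> i j; rewrite /W; ring.
rewrite /G.
under eq_bigr do (under eq_bigr do rewrite mulrDr); rewrite /=.
under eq_bigr do rewrite big_split; rewrite big_split /=.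
have e1 : \sum_(i < n) \sum_(j < n) W i j * (if l == j then M i k else 0)
          = \sum_(i < n) W i l * M i k.
  apply: eq_bigr => i _; rewrite (bigD1 l) //= eqxx big1 ?addr0 // => j /negbTE.
  by rewrite eq_sym => ->; rewrite mulr0.
have e2 : \sum_(i < n) \sum_(j < n) W i j * (if k == i then M j l else 0)
          = \sum_(j < n) W k j * M j l.
  rewrite (bigD1 k) //= [X in _ + X]big1 ?addr0.
    by apply: eq_bigr => j _; rewrite eqxx.
  by move=> i /negbTE; rewrite eq_sym => ->; apply: big1 => j _; rewrite mulr0.
have e3 : \sum_(i < n) W i l * M i k =
   u 0 l * \sum_(i < n) v 0 i * M i k - v 0 l * \sum_(i < n) u 0 i * M i k.
  by rewrite !mulr_sumr -sumrB; apply: eq_bigr => i0 _; rewrite /W; ring.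
have e4 : \sum_(j < n) W k j * M j l =
   v 0 k * \sum_(i < n) u 0 i * M i l - u 0 k * \sum_(i < n) v 0 i * M i l.
  by rewrite !mulr_sumr -sumrB; apply: eq_bigr => i0 _; rewrite /W; ring.
transitivity (\sum_(i < n) W i l * M i k + \sum_(j < n) W k j * M j l).
  by congr (_ + _); [exact: e1 | exact: e2].
rewrite e3 e4 !hv' !hu' /W; ring.
Qed.

Lemma wv_neq0 : v != 0 -> u != 0 -> x != y -> wv != 0.
Proof.
move=> v0 u0 xy; apply/eqP => w0.
have Wz (i j : 'I_n) : (i < j)%N -> W i j = 0.
  move=> ij.
  have mem : (i, j) \in wedge_pairs n.
    rewrite mem_filter /= ij /=; apply/allpairsP; exists (i, j).
    by rewrite !mem_enum.
  have lt : (index (i, j) (wedge_pairs n) < wedge_dim n)%N by rewrite index_mem.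
  have := congr1 (fun r : 'rV_(wedge_dim n) => r 0 (Ordinal lt)) w0.
  by rewrite !mxE /wedge_idx (tnth_nth (i, j)) /= nth_index.
have Wall (i j : 'I_n) : W i j = 0.
  case: (ltngtP i j) => [/Wz //|/Wz ji|/val_inj ->]; last by rewrite /W subrr.
  by move: ji; rewrite /W => /eqP; rewrite subr_eq0 => /eqP ->; rewrite subrr.
case: (pickP (fun k => v 0 k != 0)) => [k vk|h]; last first.
  by case/eqP: v0; apply/rowP => j; rewrite mxE; apply/eqP; exact: negbFE (h j).
have uc : u = (u 0 k / v 0 k) *: v.
  apply/rowP => j; rewrite mxE.
  have := Wall k j; rewrite /W => /eqP; rewrite subr_eq0 => /eqP e.
  by apply: (mulfI vk); rewrite e; field.
have : (x - y) *: u = 0.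
  rewrite scalerBl -hu {2}uc -scalemxAl hv scalerA mulrC -scalerA -uc.
  by rewrite subrr.
by move/eqP; rewrite scaler_eq0 subr_eq0 (negbTE xy) (negbTE u0).
Qed.

End Eig.

Theorem lemma2p4 (R : rcfType) (n : nat) (M : 'M[R]_n) :
  (2 <= n)%N ->
  (P0_matrix (compound2 M) ->
     forall z : R[i], complex_eigenvalue M z -> complex.Im z != 0 -> ~ (complex.Re z < 0)) /\
  (P0_matrix (- compound2 M) ->
     forall z : R[i], complex_eigenvalue M z -> complex.Im z != 0 -> ~ (0 < complex.Re z)).
Proof.
move=> _.
have key : forall z : R[i], complex_eigenvalue M z -> complex.Im z != 0 ->
    \det (compound2 M - (2%:R * complex.Re z)%:M) = 0.
  move=> z /eigenvalueP [v hv v0] hz.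
  pose u := map_mx conjc v.
  have hu : u *m map_mx (real_complex R) M = z^*%C *: u.
    have Mcc : map_mx conjc (map_mx (real_complex R) M) = map_mx (real_complex R) M.
      by apply/matrixP => i j; rewrite !mxE conjc_real.
    by rewrite /u -{1}Mcc -map_mxM hv map_mxZ.
  have u0 : u != 0.
    apply: contra v0 => /eqP uz; apply/eqP/rowP => j.
    have := congr1 (fun r : 'rV_n => r 0 j) uz; rewrite !mxE => /eqP.
    by rewrite conjc_eq0 => /eqP.
  have xy : z != z^*%C.
    apply: contra hz; case: z {hv hu} => a b /= /eqP [] e.
    apply/eqP; lra.
  have e1 := wv_eig hv hu.
  have e2 := wv_neq0 hv hu v0 u0 xy.
  have : \det (compound2 (map_mx (real_complex R) M) - (z + z^*%C)%:M) == 0.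
    apply/det0P; exists (wv v u) => //.
    by rewrite mulmxBr e1 mul_mx_scalar subrr.
  rewrite addcJ.
  have -> : compound2 (map_mx (real_complex R) M) - (2%:R * (real_complex R (complex.Re z)))%:M
      = map_mx (real_complex R) (compound2 M - (2%:R * complex.Re z)%:M).
    rewrite map_mxB map_compound2 map_scalar_mx; congr (_ - _%:M).
    by rewrite rmorphM rmorph_nat.
  by rewrite det_map_mx fmorph_eq0 => /eqP.
split.
  move=> hP z ev hz hneg.
  have := P0_shift hP (_ : 0 < - (2%:R * complex.Re z)).
  rewrite raddfN /= key // => H.
  suff : (0 : R) < 0 by rewrite ltxx.
  apply: H; lra.
move=> hP z ev hz hpos.
have := P0_shift hP (_ : 0 < 2%:R * complex.Re z).
have -> : - compound2 M + (2%:R * complex.Re z)%:M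
    = - 1 *: (compound2 M - (2%:R * complex.Re z)%:M).
  by rewrite scaleN1r opprB addrC.
rewrite detZ key // mulr0 => H.
suff : (0 : R) < 0 by rewrite ltxx.
apply: H; lra.
Qed.
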